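(* Assume the current syndrome $\sigma$ is non-empty. (i) If $\sigma \subseteq \{v_1\}\times C_2$ for some fixed $v_1\in V_1$ (a horizontal line), then every set $F\in\mathcal F$ with $\mathrm{score}(F)=\max_{F'\in\mathcal F}\mathrm{score}(F')>0$ satisfies $F\subseteq \{v_1\}\times V_2$. (ii) Symmetrically, if $\sigma\subseteq V_1\times\{c_2\}$ for some fixed $c_2\in C_2$ (a vertical line), then every set $F\in\mathcal F$ with $\mathrm{score}(F)=\max_{F'\in\mathcal F}\mathrm{score}(F')>0$ satisfies $F\subseteq C_1\times\{c_2\}$. In other words, the only sets that Small-Set-Flip can flip in this situation lie on the line $\{v_1\}\times V_2$ (resp. $C_1\times\{c_2\}$).
   Context: Let $G=(V\cup C,E)$ be a connected bipartite graph that is $(\Delta_V,\Delta_C)$-biregular (every vertex of $V$ has degree $\Delta_V$, every vertex of $C$ has degree $\Delta_C$), with $\Delta_V,\Delta_C\ge 2$. For a vertex $x$, $\Gamma(x)$ denotes its set of neighbours in $G$. Let $G_1=(V_1\cup C_1,E_1)$ and $G_2=(V_2\cup C_2,E_2)$ be two copies of $G$. The hypergraph product code has qubit set $Q=V_1\times V_2\ \sqcup\ C_1\times C_2$. Its $X$-type checks are indexed by $V_1\times C_2$, the check $(v,c)$ acting on the qubits $\{v\}\times\Gamma(c)\ \sqcup\ \Gamma(v)\times\{c\}$. Its $Z$-type generators are indexed by $C_1\times V_2$, the generator $(c,v)$ having support $\mathrm{supp}(c,v)=\Gamma(c)\times\{v\}\ \sqcup\ \{c\}\times\Gamma(v)$.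 For a set $F\subseteq Q$ (support of a $Z$ error), its syndrome $\sigma(F)\subseteq V_1\times C_2$ is the set of $X$-checks acting on an odd number of qubits of $F$. The current syndrome $\sigma\subseteq V_1\times C_2$ is the set of unsatisfied checks. Let $\mathcal F=\{F: F\subseteq \mathrm{supp}(c,v)\text{ for some }(c,v)\in C_1\times V_2\}$. For $F\neq\emptyset$, $\mathrm{score}(F)=\big(|\sigma|-|\sigma\,\triangle\,\sigma(F)|\big)/|F|$ (here $\triangle$ is symmetric difference, i.e. sum mod 2), and $\mathrm{score}(\emptyset)=0$. The Small-Set-Flip decoder, in each iteration, selects a set $F\in\mathcal F$ maximizing $\mathrm{score}$ and, if that score is positive, flips it (replacing $\sigma$ by $\sigma\triangle\sigma(F)$); otherwise it stops. *)

(* Defs.v *)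
From mathcomp Require Import all_boot all_order all_algebra.
Set Implicit Arguments. Unset Strict Implicit. Unset Printing Implicit Defensive.
Import Order.TTheory GRing.Theory Num.Theory.

Section HGP.
Variables (V C : finType) (adj : V -> C -> bool).
(* G = (V u C, E) bipartite, with edge set {(v,c) | adj v c}.
   Both copies G1, G2 are G itself: V1 = V2 = V, C1 = C2 = C. *)

Definition Gv (v : V) : {set C} := [set c | adj v c].
Definition Gc (c : C) : {set V} := [set v | adj v c].

Definition bip_edge : rel (V + C) := fun x y =>
  match x, y with
  | inl v, inr c => adj v c
  | inr c, inl v => adj v c
  | _, _ => false
  end.
Definition bip_connected : Prop := forall x y : V + C, connect bip_edge x y.

(* qubits : V1 x V2 (inl) disjoint-union C1 x C2 (inr) *)
Definition xcheck (x : V * C) : {set (V * V) + (C * C)} :=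
  [set q | match q with
           | inl (a, b) => (a == x.1) && (b \in Gc x.2)
           | inr (c1, c2) => (c1 \in Gv x.1) && (c2 == x.2)
           end].

Definition zsupp (y : C * V) : {set (V * V) + (C * C)} :=
  [set q | match q with
           | inl (a, b) => (a \in Gc y.1) && (b == y.2)
           | inr (c1, c2) => (c1 == y.1) && (c2 \in Gv y.2)
           end].

Definition syndrome (F : {set (V * V) + (C * C)}) : {set V * C} :=
  [set x | odd #|F :&: xcheck x|].

Definition in_family (F : {set (V * V) + (C * C)}) : bool :=
  [exists y : C * V, F \subset zsupp y].

Definition symdiff (T : finType) (A B : {set T}) : {set T} :=
  (A :\: B) :|: (B :\: A).

Local Open Scope ring_scope.
Definition score (sigma : {set V * C}) (F : {set (V * V) + (C * C)}) : rat :=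
  if F == set0 then 0
  else ((#|sigma|%:R - #|symdiff sigma (syndrome F)|%:R) / #|F|%:R).

End HGP.

(* Main.v *)
Require Import Defs.
From mathcomp Require Import all_boot all_order all_algebra.
From mathcomp Require Import zify ring lra.
Import Order.TTheory GRing.Theory Num.Theory.

Section Aux.
Variables (V C : finType) (adj : V -> C -> bool).
Local Notation Q := ((V * V) + (C * C))%type.

Lemma card_sub2 (T : finType) (S : {set T}) p q : p != q ->
  S \subset [set p; q] -> #|S| = (p \in S) + (q \in S).
Proof.
move=> npq hS; rewrite (cardsD1 p S).
have -> : #|S :\ p| = (q \in S).
  rewrite (cardsD1 q (S :\ p)).
  have -> : S :\ p :\ q = set0.
    apply/setP => x; rewrite !inE.
    case: (boolP (x \in S)) => xS; last by rewrite !andbF.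
    move/subsetP: hS => /(_ x xS); rewrite !inE.
    by case/orP => ->; rewrite ?eqxx ?andbF.
  by rewrite cards0 addn0 !inE eq_sym npq.
by [].
Qed.

Lemma syn_mem (F : {set Q}) (c : C) (v : V) (x : V) (y : C) :
  F \subset zsupp adj (c, v) ->
  ((x, y) \in syndrome adj F) =
  ((inl (x, v) \in F) && adj v y) (+) ((inr (c, y) \in F) && adj x c).
Proof.
move=> hF; rewrite inE.
rewrite (@card_sub2 _ _ (inl (x, v)) (inr (c, y))) //.
  by rewrite oddD !oddb !inE /= !eqxx /= andbT.
  apply/subsetP => q; rewrite !inE => /andP[qF].
move/subsetP: hF => /(_ q qF); rewrite !inE.
case: q qF => [[a b]|[c1 c2]] qF /=.
  by move=> /andP[h1 /eqP h2] /andP[/eqP h3 h4]; subst; rewrite eqxx.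
by move=> /andP[/eqP h1 h2] /andP[h3 /eqP h4]; subst.
Qed.

Local Open Scope ring_scope.
Definition gain (sigma S : {set V * C}) : rat :=
  #|sigma|%:R - #|symdiff sigma S|%:R.

Lemma gainE sigma S : gain sigma S = 2 * #|sigma :&: S|%:R - #|S|%:R.
Proof.
have e : (#|sigma| + #|S| = #|symdiff sigma S| + 2 * #|sigma :&: S|)%N.
  have e1 := cardsID S sigma. have e2 := cardsID sigma S.
  have e3 : #|symdiff sigma S| = (#|sigma :\: S| + #|S :\: sigma|)%N.
    rewrite /symdiff cardsU.
    have -> : (sigma :\: S) :&: (S :\: sigma) = set0.
      apply/setP => x; rewrite !inE.
      by case: (x \in sigma); case: (x \in S).
    by rewrite cards0 subn0.
  rewrite setIC in e2; lia.
rewrite /gain.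
have : (#|sigma| + #|S|)%:R = (#|symdiff sigma S| + 2 * #|sigma :&: S|)%:R :> rat
  by rewrite e.
rewrite !natrD => h. lra.
Qed.

Lemma score_gain sigma F : F != set0 ->
  score adj sigma F = gain sigma (syndrome adj F) / #|F|%:R.
Proof. by move=> h; rewrite /score (negbTE h). Qed.

Lemma core (g g' : rat) (n : nat) : (2 <= n)%N -> 0 < g -> g <= g' -> g / n%:R < g'.
Proof.
move=> hn hg hgg.
have hnR : 2 <= n%:R :> rat by rewrite (ler_nat _ 2 n).
rewrite ltr_pdivrMr; last lra.
nra.
Qed.

Lemma in_fam1 (F : {set Q}) c v : F \subset zsupp adj (c, v) -> in_family adj F.
Proof. by move=> h; apply/existsP; exists (c, v). Qed.

Lemma two_le (F : {set Q}) q1 q2 : q1 \in F -> q2 \in F -> q1 != q2 -> (2 <= #|F|)%N.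
Proof.
move=> h1 h2 h12; have := cards2 q1 q2; rewrite h12 => <-.
by apply: subset_leq_card; apply/subsetP => x; rewrite !inE => /orP[]/eqP->.
Qed.

Lemma main1 dV dC (hdV : (2 <= dV)%N) (hdC : (2 <= dC)%N)
  (hregV : forall v : V, #|Gv adj v| = dV)
  (hregC : forall c : C, #|Gc adj c| = dC)
  (sigma : {set V * C}) v1 (hs : sigma \subset [set x | x.1 == v1])
  (F : {set Q}) (hF : in_family adj F)
  (hmax : forall F', in_family adj F' -> (score adj sigma F' <= score adj sigma F)%R)
  (hpos : (0 < score adj sigma F)%R) :
  F \subset [set q | if q is inl (a, _) then a == v1 else false].
Proof.
case/existsP: hF => [[c v] hFz].
have Fne : F != set0.
  by apply/negP => /eqP F0; move: hpos; rewrite /score F0 eqxx ltxx.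
set SF := syndrome adj F.
have SM := fun x y => @syn_mem F c v x y hFz.
have Fpos : 0 < #|F|%:R :> rat by rewrite ltr0n card_gt0.
have gpos : 0 < gain sigma SF.
  have := mulr_gt0 hpos Fpos; rewrite score_gain // divfK //.
  by rewrite gt_eqF.
have hzl : forall a b, inl (a, b) \in F -> adj a c && (b == v).
  by move=> a b h; move/subsetP: hFz => /(_ _ h); rewrite !inE.
have hzr : forall c1 c2, inr (c1, c2) \in F -> (c1 == c) && adj v c2.
  by move=> a b h; move/subsetP: hFz => /(_ _ h); rewrite !inE.
pose r x := [set y | (x, y) \in SF].
have memr : forall x y, (y \in r x) =
   ((inl (x, v) \in F) && adj v y) (+) ((inr (c, y) \in F) && adj x c).
  by move=> x y; rewrite inE SM.
have hI : (#|sigma :&: SF| <= #|r v1|)%N.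
  rewrite -[#|r v1|]mul1n -(cards1 v1) -cardsX.
  apply: subset_leq_card; apply/subsetP => -[x y]; rewrite !inE => /andP[hx hy].
  move/subsetP: hs => /(_ _ hx); rewrite inE /= => /eqP ex; subst x.
  by rewrite eqxx.
have [u hu] : exists u, u \in Gc adj c :\ v1.
  apply/card_gt0P; have := cardsD1 v1 (Gc adj c); rewrite hregC.
  case: (v1 \in _) => /=; lia.
move: hu; rewrite !inE => /andP[uv1 huc].
have hU : (#|r v1| + #|r u| <= #|SF|)%N.
  rewrite -[#|r v1|]mul1n -(cards1 v1) -cardsX.
  rewrite -[#|r u|]mul1n -(cards1 u) -cardsX.
  have -> : (#|setX [set v1] (r v1)| + #|setX [set u] (r u)|)%N =
            #|setX [set v1] (r v1) :|: setX [set u] (r u)|.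
    rewrite cardsU.
    have -> : setX [set v1] (r v1) :&: setX [set u] (r u) = set0.
      apply/setP => -[x y]; rewrite !inE.
      case: (boolP (x == v1)) => // /eqP ->; by rewrite /= eq_sym (negbTE uv1) !andbF.
    by rewrite cards0 subn0.
  apply: subset_leq_card; apply/subsetP => -[x y]; rewrite !inE.
  by case/orP => /andP[/eqP /= -> h].
have gE := gainE sigma SF.
case: (boolP (adj v1 c && ((inl (v1, v) \in F) != (inl (u, v) \in F)))); last first.
  move=> hsame.
  have hsub : r v1 \subset r u.
    apply/subsetP => y; rewrite !memr huc.
    move: hsame; case: (boolP (adj v1 c)) => hv1c /=.
      by move/negbNE/eqP => ->.
    have -> : (inl (v1, v) \in F) = false.
      by apply/negbTE/negP => /hzl /andP[h _]; rewrite h in hv1c.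
    by rewrite /= andbF.
  have := subset_leq_card hsub => hle.
  have : ((2 * #|sigma :&: SF|)%N%:R <= #|SF|%:R :> rat).
    rewrite ler_nat mul2n -addnn; apply: leq_trans hU; apply: leq_add => //; exact: leq_trans hI hle.
  rewrite natrM => h; move: gpos; rewrite gE; lra.
case/andP => hv1c hdiff.
have hcov : (dV <= #|r v1| + #|r u|)%N.
  rewrite -(hregV v); apply: leq_trans (leq_card_setU _ _).
  apply: subset_leq_card; apply/subsetP => y; rewrite inE => hy.
  rewrite in_setU !memr hv1c huc hy !andbT.
  by move: hdiff; case: (_ \in F); case: (_ \in F); case: (_ \in F).
pose F' := [set (inl (v1, v) : Q)].
have hF'z : F' \subset zsupp adj (c, v).
  by apply/subsetP => q; rewrite inE => /eqP ->; rewrite !inE hv1c eqxx.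
have SF' : syndrome adj F' = setX [set v1] (Gv adj v).
  apply/setP => -[x y]; rewrite (@syn_mem F' c v x y hF'z) !inE /=.
  have -> : (inl (x, v) == inl (v1, v) :> Q) = (x == v1) by apply/eqP/eqP => [[]|->].
  by rewrite addbF.
have hsub' : sigma :&: SF \subset sigma :&: syndrome adj F'.
  apply/subsetP => -[x y]; rewrite !in_setI => /andP[hx hy]; rewrite hx /= SF' in_setX in_set1.
  move/subsetP: hs => /(_ _ hx); rewrite inE /= => /eqP ex; subst x.
  rewrite eqxx /= inE; move: hy; rewrite /SF SM.
  case: (boolP (inr (c, y) \in F)) => [/hzr /andP[_ ->] //|_].
  by rewrite andFb addbF => /andP[].
have hle1 : forall q1 q2, q1 \in F -> q2 \in F -> q1 = q2.
  move=> q1 q2 h1 h2; apply/eqP/negPn/negP => h12.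
  have h2F := @two_le F q1 q2 h1 h2 h12.
  have hF'ne : F' != set0 by apply/set0Pn; exists (inl (v1, v)); rewrite inE.
  have := hmax F' (@in_fam1 F' c v hF'z).
  rewrite (@score_gain sigma F' hF'ne) (@score_gain sigma F Fne) cards1 divr1.
  apply/negP; rewrite -ltNge.
  apply: (@core _ _ #|F| h2F gpos).
  rewrite !gainE SF' cardsX cards1 mul1n hregV.
  have h1' : (#|sigma :&: SF|%:R <= #|sigma :&: setX [set v1] (Gv adj v)|%:R :> rat).
    rewrite ler_nat; apply: subset_leq_card; rewrite -SF'; exact: hsub'.
  have h2' : (dV%:R <= #|SF|%:R :> rat) by rewrite ler_nat; apply: leq_trans hcov hU.
  lra.
have [[x y] hxy] : exists p, p \in sigma :&: SF.
  apply/card_gt0P; rewrite lt0n; apply/negP => /eqP h0.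
  move: gpos; rewrite gE h0 => h.
  have : 0 <= #|SF|%:R :> rat by exact: ler0n.
  lra.
move: hxy; rewrite in_setI => /andP[hx]; rewrite /SF SM => hy.
move/subsetP: hs => /(_ _ hx); rewrite inE /= => /eqP ex; subst x.
apply/subsetP => q qF.
case: (boolP (inl (v1, v) \in F)) => hp1.
  by rewrite (hle1 _ _ qF hp1) inE eqxx.
have hpu : inl (u, v) \in F by move: hdiff; rewrite (negbTE hp1); case: (_ \in F).
move: hy; rewrite (negbTE hp1) /= => /andP[hr _].
by case: (hle1 _ _ hr hpu).
Qed.

Lemma main2 dV dC (hdV : (2 <= dV)%N) (hdC : (2 <= dC)%N)
  (hregV : forall v : V, #|Gv adj v| = dV)
  (hregC : forall c : C, #|Gc adj c| = dC)
  (sigma : {set V * C}) c2 (hs : sigma \subset [set x | x.2 == c2])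
  (F : {set Q}) (hF : in_family adj F)
  (hmax : forall F', in_family adj F' -> (score adj sigma F' <= score adj sigma F)%R)
  (hpos : (0 < score adj sigma F)%R) :
  F \subset [set q | if q is inr (_, b) then b == c2 else false].
Proof.
case/existsP: hF => [[c v] hFz].
have Fne : F != set0.
  by apply/negP => /eqP F0; move: hpos; rewrite /score F0 eqxx ltxx.
set SF := syndrome adj F.
have SM := fun x y => @syn_mem F c v x y hFz.
have Fpos : 0 < #|F|%:R :> rat by rewrite ltr0n card_gt0.
have gpos : 0 < gain sigma SF.
  have := mulr_gt0 hpos Fpos; rewrite score_gain // divfK //.
  by rewrite gt_eqF.
have hzl : forall a b, inl (a, b) \in F -> adj a c && (b == v).
  by move=> a b h; move/subsetP: hFz => /(_ _ h); rewrite !inE.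
have hzr : forall c1 c2, inr (c1, c2) \in F -> (c1 == c) && adj v c2.
  by move=> a b h; move/subsetP: hFz => /(_ _ h); rewrite !inE.
pose r y := [set x | (x, y) \in SF].
have memr : forall x y, (x \in r y) =
   ((inl (x, v) \in F) && adj v y) (+) ((inr (c, y) \in F) && adj x c).
  by move=> x y; rewrite inE SM.
have hI : (#|sigma :&: SF| <= #|r c2|)%N.
  rewrite -[#|r c2|]muln1 -(cards1 c2) -cardsX.
  apply: subset_leq_card; apply/subsetP => -[x y]; rewrite !inE => /andP[hx hy].
  move/subsetP: hs => /(_ _ hx); rewrite inE /= => /eqP ey; subst y.
  by rewrite eqxx andbT.
have [w hw] : exists w, w \in Gv adj v :\ c2.
  apply/card_gt0P; have := cardsD1 c2 (Gv adj v); rewrite hregV.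
  case: (c2 \in _) => /=; lia.
move: hw; rewrite !inE => /andP[wc2 hvw].
have hU : (#|r c2| + #|r w| <= #|SF|)%N.
  rewrite -[#|r c2|]muln1 -(cards1 c2) -cardsX.
  rewrite -[#|r w|]muln1 -(cards1 w) -cardsX.
  have -> : (#|setX (r c2) [set c2]| + #|setX (r w) [set w]|)%N =
            #|setX (r c2) [set c2] :|: setX (r w) [set w]|.
    rewrite cardsU.
    have -> : setX (r c2) [set c2] :&: setX (r w) [set w] = set0.
      apply/setP => -[x y]; rewrite !inE.
      case: (boolP (y == c2)) => [/eqP ->|]; last by rewrite !andbF.
      by rewrite /= eq_sym (negbTE wc2) !andbF.
    by rewrite cards0 subn0.
  apply: subset_leq_card; apply/subsetP => -[x y]; rewrite !inE.
  by case/orP => /andP[h /eqP /= ->].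
have gE := gainE sigma SF.
case: (boolP (adj v c2 && ((inr (c, c2) \in F) != (inr (c, w) \in F)))); last first.
  move=> hsame.
  have hsub : r c2 \subset r w.
    apply/subsetP => x; rewrite !memr hvw.
    move: hsame; case: (boolP (adj v c2)) => hv2c /=.
      by move/negbNE/eqP => ->.
    have -> : (inr (c, c2) \in F) = false.
      by apply/negbTE/negP => /hzr /andP[_ h]; rewrite h in hv2c.
    by rewrite /= !andbF.
  have := subset_leq_card hsub => hle.
  have : ((2 * #|sigma :&: SF|)%N%:R <= #|SF|%:R :> rat).
    rewrite ler_nat mul2n -addnn; apply: leq_trans hU; apply: leq_add => //; exact: leq_trans hI hle.
  rewrite natrM => h; move: gpos; rewrite gE; lra.
case/andP => hv2c hdiff.
have hcov : (dC <= #|r c2| + #|r w|)%N.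
  rewrite -(hregC c); apply: leq_trans (leq_card_setU _ _).
  apply: subset_leq_card; apply/subsetP => x; rewrite inE => hx.
  rewrite in_setU !memr hv2c hvw hx !andbT.
  by move: hdiff; case: (_ \in F); case: (_ \in F); case: (_ \in F).
pose F' := [set (inr (c, c2) : Q)].
have hF'z : F' \subset zsupp adj (c, v).
  by apply/subsetP => q; rewrite inE => /eqP ->; rewrite !inE hv2c eqxx.
have SF' : syndrome adj F' = setX (Gc adj c) [set c2].
  apply/setP => -[x y]; rewrite (@syn_mem F' c v x y hF'z) !inE /=.
  have -> : (inr (c, y) == inr (c, c2) :> Q) = (y == c2) by apply/eqP/eqP => [[]|->].
  by rewrite /= andbC.
have hsub' : sigma :&: SF \subset sigma :&: syndrome adj F'.
  apply/subsetP => -[x y]; rewrite !in_setI => /andP[hx hy]; rewrite hx /= SF' in_setX in_set1.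
  move/subsetP: hs => /(_ _ hx); rewrite inE /= => /eqP ey; subst y.
  rewrite eqxx andbT inE; move: hy; rewrite /SF SM.
  case: (boolP (inl (x, v) \in F)) => [/hzl /andP[-> _] //|_].
  by rewrite andFb /= => /andP[].
have hle1 : forall q1 q2, q1 \in F -> q2 \in F -> q1 = q2.
  move=> q1 q2 h1 h2; apply/eqP/negPn/negP => h12.
  have h2F := @two_le F q1 q2 h1 h2 h12.
  have hF'ne : F' != set0 by apply/set0Pn; exists (inr (c, c2)); rewrite inE.
  have := hmax F' (@in_fam1 F' c v hF'z).
  rewrite (@score_gain sigma F' hF'ne) (@score_gain sigma F Fne) cards1 divr1.
  apply/negP; rewrite -ltNge.
  apply: (@core _ _ #|F| h2F gpos).
  rewrite !gainE SF' cardsX cards1 muln1 hregC.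
  have h1' : (#|sigma :&: SF|%:R <= #|sigma :&: setX (Gc adj c) [set c2]|%:R :> rat).
    rewrite ler_nat; apply: subset_leq_card; rewrite -SF'; exact: hsub'.
  have h2' : (dC%:R <= #|SF|%:R :> rat) by rewrite ler_nat; apply: leq_trans hcov hU.
  lra.
have [[x y] hxy] : exists p, p \in sigma :&: SF.
  apply/card_gt0P; rewrite lt0n; apply/negP => /eqP h0.
  move: gpos; rewrite gE h0 => h.
  have : 0 <= #|SF|%:R :> rat by exact: ler0n.
  lra.
move: hxy; rewrite in_setI => /andP[hx]; rewrite /SF SM => hy.
move/subsetP: hs => /(_ _ hx); rewrite inE /= => /eqP ey; subst y.
apply/subsetP => q qF.
case: (boolP (inr (c, c2) \in F)) => hp1.
  by rewrite (hle1 _ _ qF hp1) inE eqxx.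
have hpw : inr (c, w) \in F by move: hdiff; rewrite (negbTE hp1); case: (_ \in F).
move: hy; rewrite (negbTE hp1) andFb addbF => /andP[hr _].
by case: (hle1 _ _ hr hpw).
Qed.
End Aux.
Theorem lemma1 (V C : finType) (adj : V -> C -> bool) (dV dC : nat)
  (hdV : (2 <= dV)%N) (hdC : (2 <= dC)%N)
  (hregV : forall v : V, #|Gv adj v| = dV)
  (hregC : forall c : C, #|Gc adj c| = dC)
  (hconn : bip_connected adj)
  (sigma : {set V * C})
  (hsig : exists E : {set (V * V) + (C * C)}, sigma = syndrome adj E)
  (hne : sigma != set0) :
  (forall v1 : V, sigma \subset [set x | x.1 == v1] ->
     forall F : {set (V * V) + (C * C)}, in_family adj F ->
       (forall F', in_family adj F' -> (score adj sigma F' <= score adj sigma F)%R) ->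
       (0 < score adj sigma F)%R ->
       F \subset [set q | if q is inl (a, _) then a == v1 else false])
  /\
  (forall c2 : C, sigma \subset [set x | x.2 == c2] ->
     forall F : {set (V * V) + (C * C)}, in_family adj F ->
       (forall F', in_family adj F' -> (score adj sigma F' <= score adj sigma F)%R) ->
       (0 < score adj sigma F)%R ->
       F \subset [set q | if q is inr (_, b) then b == c2 else false]).
Proof.
split.
- move=> v1 hs F hF hmax hpos.
  exact: (@main1 V C adj dV dC hdV hdC hregV hregC sigma v1 hs F hF hmax hpos).
- move=> c2 hs F hF hmax hpos.
  exact: (@main2 V C adj dV dC hdV hdC hregV hregC sigma c2 hs F hF hmax hpos).
Qed.
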